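(* Let $N\ge 2$, $1\le K\le N-1$, $Z>0$ and $\delta>0$. Let $$U(x)=\sum_{j=1}^N-\frac{Z}{|x_j|}+\sum_{j\neq k}\frac{1}{|x_j-x_k|}.$$ Then for every $x\in\Omega$: - if $|x|_{N-K}>\delta|x|_{N-K+1}$, then $$U(x)\ge U_{N-K-1}(x)-\frac{Z}{\delta|x|_{N-K+1}}-\sum_{j=N-K+1}^N\frac{Z}{|x|_j};$$ - if $|x|_{N-K}<\delta|x|_{N-K+1}$, then $$U(x)\ge U_{N-K}(x)+\sum_{j=N-K+1}^N\Big(\frac{N-K}{1+\delta}-Z\Big)\frac{1}{|x|_j}.$$
   Context: For $x=(x_1,\dots,x_N)\in\mathbb R^{3N}$ with $x_j\in\mathbb R^3$, $|x|_k$ denotes the $k$-th smallest of $|x_1|,\dots,|x_N|$, counted with multiplicity, so that $|x|_1\le\dots\le|x|_N$. Let $\Omega=\{x\in\mathbb R^{3N}: |x|_1<|x|_2<\dots<|x|_N\}$. On $\Omega$, let $\tilde x_j$ denote the unique coordinate $x_i$ with $|x_i|=|x|_j$. For $0\le M\le N$, $$U_M(x)=\sum_{j=1}^M-\frac{Z}{|x|_j}+\sum_{j\neq k,\ j,k\le M}\frac{1}{|\tilde x_j-\tilde x_k|},$$ with $U_0=0$. This is the potential of the $M$ innermost electrons. *)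

(* Defs.v *)
From Stdlib Require Import Reals Lra Lia Arith.
Open Scope R_scope.

Definition vec3 : Type := (R * R * R)%type.

Definition norm3 (v : vec3) : R :=
  let '(a, b, c) := v in sqrt (a * a + b * b + c * c).

Definition sub3 (v w : vec3) : vec3 :=
  let '(a, b, c) := v in let '(a', b', c') := w in (a - a', b - b', c - c').

Definition dist3 (v w : vec3) : R := norm3 (sub3 v w).

Fixpoint sumR (f : nat -> R) (n : nat) : R :=
  match n with
  | O => 0
  | S m => sumR f m + f m
  end.

(* sum_{j=a}^{b} f j  (inclusive; empty if b < a) *)
Definition sum_from_to (f : nat -> R) (a b : nat) : R :=
  sumR (fun i => f (a + i)%nat) (S b - a).

(* A configuration x = (x_1,...,x_N) is stored 0-based: x_j is [x (j-1)].
   [sorting N x sigma]: sigma is a permutation of {0,...,N-1} listing the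
   particles by strictly increasing distance to the origin. Such a sigma
   exists iff x lies in Omega, and it is then unique. *)
Definition sorting (N : nat) (x : nat -> vec3) (sigma : nat -> nat) : Prop :=
  (forall i, (i < N)%nat -> (sigma i < N)%nat) /\
  (forall i j, (i < N)%nat -> (j < N)%nat -> sigma i = sigma j -> i = j) /\
  (forall i, (S i < N)%nat -> norm3 (x (sigma i)) < norm3 (x (sigma (S i)))).

Definition in_Omega (N : nat) (x : nat -> vec3) : Prop :=
  exists sigma, sorting N x sigma.

(* |x|_k (1-based k) and \tilde x_k, given the sorting permutation *)
Definition xt (x : nat -> vec3) (sigma : nat -> nat) (k : nat) : vec3 :=
  x (sigma (k - 1)%nat).
Definition rn (x : nat -> vec3) (sigma : nat -> nat) (k : nat) : R :=
  norm3 (xt x sigma k).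

Definition U (N : nat) (Z : R) (x : nat -> vec3) : R :=
  sumR (fun j => - Z / norm3 (x j)) N +
  sumR (fun j => sumR (fun k =>
          if Nat.eq_dec j k then 0 else 1 / dist3 (x j) (x k)) N) N.

Definition UM (Z : R) (x : nat -> vec3) (sigma : nat -> nat) (M : nat) : R :=
  sum_from_to (fun j => - Z / rn x sigma j) 1 M +
  sum_from_to (fun j => sum_from_to (fun k =>
          if Nat.eq_dec j k then 0 else 1 / dist3 (xt x sigma j) (xt x sigma k)) 1 M) 1 M.

(* Main.v *)
Require Import Defs.
From Stdlib Require Import Reals Lra Lia List Permutation.
Open Scope R_scope.

Definition lsum (f : nat -> R) (l : list nat) : R :=
  fold_right (fun i acc => f i + acc) 0 l.

Lemma lsum_app f l1 l2 : lsum f (l1 ++ l2) = lsum f l1 + lsum f l2.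
Proof. induction l1; simpl; [lra|]. rewrite IHl1; lra. Qed.

Lemma sumR_lsum f n : sumR f n = lsum f (seq 0 n).
Proof.
  induction n; [reflexivity|]. cbn [sumR].
  rewrite seq_S, lsum_app, IHn; simpl; lra.
Qed.

Lemma lsum_map f g l : lsum f (map g l) = lsum (fun i => f (g i)) l.
Proof. induction l; simpl; auto. rewrite IHl; auto. Qed.

Lemma lsum_perm f l l' : Permutation l l' -> lsum f l = lsum f l'.
Proof. induction 1; simpl; lra. Qed.

Lemma sumR_perm N (sigma : nat -> nat) f :
  (forall i, (i < N)%nat -> (sigma i < N)%nat) ->
  (forall i j, (i < N)%nat -> (j < N)%nat -> sigma i = sigma j -> i = j) ->
  sumR f N = sumR (fun a => f (sigma a)) N.
Proof.
  intros H1 H2.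
  rewrite !sumR_lsum, <- (lsum_map f sigma).
  apply lsum_perm, Permutation_sym, Permutation_map_same_l.
  - apply FinFun.Injective_map_NoDup_in; [|apply seq_NoDup].
    intros a b Ha Hb; apply in_seq in Ha; apply in_seq in Hb; apply H2; lia.
  - intros y Hy. apply in_map_iff in Hy as [a [<- Ha]].
    apply in_seq in Ha. apply in_seq. specialize (H1 a). lia.
Qed.

Lemma sumR_ext f g n : (forall i, (i < n)%nat -> f i = g i) -> sumR f n = sumR g n.
Proof.
  induction n; simpl; intros H; auto.
  rewrite IHn by (intros; apply H; lia). rewrite H by lia. auto.
Qed.

Lemma sumR_le f g n : (forall i, (i < n)%nat -> f i <= g i) -> sumR f n <= sumR g n.
Proof.
  induction n; simpl; intros H; [lra|].
  assert (sumR f n <= sumR g n) by (apply IHn; intros; apply H; lia).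
  specialize (H n ltac:(lia)). lra.
Qed.

Lemma sumR_plus f g n : sumR (fun i => f i + g i) n = sumR f n + sumR g n.
Proof. induction n; simpl; [lra|]. rewrite IHn; lra. Qed.

Lemma sumR_opp f n : sumR (fun i => - f i) n = - sumR f n.
Proof. induction n; simpl; [lra|]. rewrite IHn; lra. Qed.

Lemma sumR_const c n : sumR (fun _ => c) n = INR n * c.
Proof. induction n; simpl sumR; [simpl; lra|]. rewrite IHn, S_INR; lra. Qed.

Lemma sumR_split f m n : sumR f (m + n) = sumR f m + sumR (fun i => f (m + i)%nat) n.
Proof.
  induction n; simpl.
  - rewrite Nat.add_0_r; lra.
  - rewrite Nat.add_succ_r; simpl; rewrite IHn; lra.
Qed.

Lemma norm3_nonneg v : 0 <= norm3 v.
Proof. destruct v as [[a b] c]; simpl; apply sqrt_pos. Qed.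

Lemma dist3_nonneg v w : 0 <= dist3 v w.
Proof. unfold dist3; apply norm3_nonneg. Qed.

Lemma dist3_tri v w : dist3 v w <= norm3 v + norm3 w.
Proof.
  destruct v as [[a1 a2] a3]; destruct w as [[b1 b2] b3].
  unfold dist3; simpl.
  set (B := a1*a1+a2*a2+a3*a3). set (C := b1*b1+b2*b2+b3*b3).
  assert (HB : 0 <= B) by (unfold B; nra). assert (HC : 0 <= C) by (unfold C; nra).
  pose proof (sqrt_pos B). pose proof (sqrt_pos C).
  pose proof (sqrt_sqrt B HB). pose proof (sqrt_sqrt C HC).
  set (sB := sqrt B) in *. set (sC := sqrt C) in *.
  rewrite <- (sqrt_square (sB + sC)) by lra.
  apply sqrt_le_1_alt.
  assert (Hp : (sB * sC) * (sB * sC) = B * C) by (rewrite <- H1, <- H2; ring).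
  assert (HL : B * C - (a1*b1+a2*b2+a3*b3)^2 >= 0).
  { unfold B, C.
    replace ((a1*a1+a2*a2+a3*a3)*(b1*b1+b2*b2+b3*b3) - (a1*b1+a2*b2+a3*b3)^2)
      with ((a1*b2-a2*b1)^2 + (a1*b3-a3*b1)^2 + (a2*b3-a3*b2)^2) by ring.
    pose proof (pow2_ge_0 (a1*b2-a2*b1)); pose proof (pow2_ge_0 (a1*b3-a3*b1));
    pose proof (pow2_ge_0 (a2*b3-a3*b2)); lra. }
  assert (Hs : - (a1*b1+a2*b2+a3*b3) <= sB * sC).
  { assert (0 <= sB * sC) by nra.
    set (t := a1*b1+a2*b2+a3*b3) in *. set (p := sB * sC) in *.
    destruct (Rle_or_lt (-t) p) as [Hq|Hq]; auto.
    assert (p * p < (-t) * (-t)) by (apply Rmult_le_0_lt_compat; lra). nra. }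
  replace ((a1 - b1) * (a1 - b1) + (a2 - b2) * (a2 - b2) + (a3 - b3) * (a3 - b3))
    with (B + C - 2 * (a1*b1+a2*b2+a3*b3)) by (unfold B, C; ring).
  nra.
Qed.

Lemma dist3_pos v w : norm3 v <> norm3 w -> 0 < dist3 v w.
Proof.
  intros Hn. destruct (Rle_lt_or_eq_dec 0 (dist3 v w) (dist3_nonneg v w)) as [H|H]; auto.
  exfalso. apply Hn.
  destruct v as [[a1 a2] a3]; destruct w as [[b1 b2] b3].
  unfold dist3 in H; simpl in H. symmetry in H.
  assert (E1 : 0 <= (a1-b1)*(a1-b1)) by apply Rle_0_sqr.
  assert (E2 : 0 <= (a2-b2)*(a2-b2)) by apply Rle_0_sqr.
  assert (E3 : 0 <= (a3-b3)*(a3-b3)) by apply Rle_0_sqr.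
  apply sqrt_eq_0 in H; [|lra].
  assert (F1 : (a1-b1)*(a1-b1) = 0) by lra.
  assert (F2 : (a2-b2)*(a2-b2) = 0) by lra.
  assert (F3 : (a3-b3)*(a3-b3) = 0) by lra.
  apply Rmult_integral in F1; apply Rmult_integral in F2; apply Rmult_integral in F3.
  assert (a1 = b1) by lra. assert (a2 = b2) by lra. assert (a3 = b3) by lra.
  subst; reflexivity.
Qed.

Theorem lemma3 (N K : nat) (Z delta : R) (x : nat -> vec3) (sigma : nat -> nat) :
  (2 <= N)%nat -> (1 <= K)%nat -> (K <= N - 1)%nat ->
  0 < Z -> 0 < delta ->
  sorting N x sigma ->
  (forall j, (j < N)%nat -> norm3 (x j) <> 0) ->
  (rn x sigma (N - K) > delta * rn x sigma (N - K + 1) ->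
     U N Z x >= UM Z x sigma (N - K - 1) - Z / (delta * rn x sigma (N - K + 1))
                 - sum_from_to (fun j => Z / rn x sigma j) (N - K + 1) N) /\
  (rn x sigma (N - K) < delta * rn x sigma (N - K + 1) ->
     U N Z x >= UM Z x sigma (N - K)
                 + sum_from_to (fun j => (INR (N - K) / (1 + delta) - Z) * (1 / rn x sigma j))
                     (N - K + 1) N).
Proof.
  intros HN HK1 HK2 HZ Hd [Hs1 [Hs2 Hs3]] Hnz.
  set (r := fun a => norm3 (x (sigma a))).
  set (G := fun a b => if Nat.eq_dec a b then 0 else 1 / dist3 (x (sigma a)) (x (sigma b))).
  assert (Hrpos : forall a, (a < N)%nat -> 0 < r a).
  { intros a Ha. pose proof (norm3_nonneg (x (sigma a))). pose proof (Hnz _ (Hs1 a Ha)).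
    unfold r; lra. }
  assert (Hmono : forall a b, (a < b)%nat -> (b < N)%nat -> r a < r b).
  { intros a b Hab. induction Hab; intros Hb.
    - apply Hs3; lia.
    - assert (r a < r m) by (apply IHHab; lia). assert (r m < r (S m)) by (apply Hs3; lia). lra. }
  assert (Hmono' : forall a b, (a <= b)%nat -> (b < N)%nat -> r a <= r b).
  { intros a b Hab Hb. destruct (Nat.eq_dec a b); [subst; lra|].
    left; apply Hmono; lia. }
  assert (HG0 : forall a b, 0 <= G a b).
  { intros a b; unfold G; destruct Nat.eq_dec; [lra|].
    destruct (Rle_lt_or_eq_dec 0 _ (dist3_nonneg (x (sigma a)) (x (sigma b)))) as [H|H].
    - left; apply Rdiv_lt_0_compat; lra.
    - rewrite <- H; unfold Rdiv; rewrite Rinv_0; lra. }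
  assert (HU : U N Z x = sumR (fun a => -Z / r a) N + sumR (fun a => sumR (G a) N) N).
  { unfold U.
    rewrite (sumR_perm N sigma (fun j => - Z / norm3 (x j))) by auto.
    f_equal.
    rewrite (sumR_perm N sigma (fun j => sumR (fun k =>
          if Nat.eq_dec j k then 0 else 1 / dist3 (x j) (x k)) N)) by auto.
    apply sumR_ext; intros a Ha.
    rewrite (sumR_perm N sigma (fun k =>
          if Nat.eq_dec (sigma a) k then 0 else 1 / dist3 (x (sigma a)) (x k))) by auto.
    apply sumR_ext; intros b Hb. unfold G.
    destruct (Nat.eq_dec (sigma a) (sigma b)), (Nat.eq_dec a b); auto.
    - exfalso; apply n; apply Hs2; auto.
    - subst; congruence. }
  assert (HUM : forall M, UM Z x sigma M =
     sumR (fun a => -Z / r a) M + sumR (fun a => sumR (G a) M) M).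
  { intros M. unfold UM, sum_from_to. replace (S M - 1)%nat with M by lia.
    f_equal.
    - apply sumR_ext; intros i Hi. unfold rn; unfold Defs.xt; unfold r.
      replace (1 + i - 1)%nat with i by lia. reflexivity.
    - apply sumR_ext; intros a Ha; apply sumR_ext; intros b Hb. unfold G; unfold Defs.xt.
      replace (1 + a - 1)%nat with a by lia. replace (1 + b - 1)%nat with b by lia.
      destruct (Nat.eq_dec (1 + a) (1 + b)), (Nat.eq_dec a b); auto; lia. }
  assert (Hnn : forall f n, (forall i, (i < n)%nat -> 0 <= f i) -> 0 <= sumR f n).
  { intros f n Hf. replace 0 with (sumR (fun _ => 0) n).
    - apply sumR_le; auto.
    - rewrite sumR_const; lra. }
  assert (HA : forall M L, (M + L = N)%nat -> sumR (fun a => -Z / r a) N =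
      sumR (fun a => -Z / r a) M + sumR (fun i => -Z / r (M + i)%nat) L).
  { intros M L HML; subst N; apply sumR_split. }
  assert (Hsplit : forall M L, (M + L = N)%nat -> sumR (fun a => sumR (G a) N) N >=
      sumR (fun a => sumR (G a) M) M + sumR (fun i => sumR (G (M+i)%nat) M) L).
  { intros M L HML. rewrite <- HML.
    rewrite (sumR_split (fun a => sumR (G a) (M + L)) M L).
    apply Rle_ge, Rplus_le_compat; apply sumR_le; intros i Hi;
      rewrite sumR_split;
      match goal with |- _ <= _ + ?s => assert (0 <= s) by (apply Hnn; auto); lra end. }
  split.
  -
    intros Hc.
    set (M := (N - K - 1)%nat) in *.
    assert (E1 : rn x sigma (N - K) = r M) by (unfold rn; unfold Defs.xt; unfold r, M; reflexivity).
    assert (E2 : rn x sigma (N - K + 1) = r (N - K)%nat).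
    { unfold rn; unfold Defs.xt; unfold r. replace (N - K + 1 - 1)%nat with (N - K)%nat by lia. reflexivity. }
    assert (E3 : sum_from_to (fun j => Z / rn x sigma j) (N - K + 1) N =
                 sumR (fun i => Z / r (N - K + i)%nat) K).
    { unfold sum_from_to. replace (S N - (N - K + 1))%nat with K by lia.
      apply sumR_ext; intros i Hi. unfold rn; unfold Defs.xt; unfold r.
      replace (N - K + 1 + i - 1)%nat with (N - K + i)%nat by lia. reflexivity. }
    rewrite E1, E2 in Hc. rewrite E2, E3, HU, HUM.
    rewrite (HA M (1 + K)%nat) by (unfold M; lia).
    pose proof (Hsplit M (1 + K)%nat ltac:(unfold M; lia)) as HS.
    assert (0 <= sumR (fun i => sumR (G (M + i)%nat) M) (1 + K)) by
      (apply Hnn; intros; apply Hnn; auto).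
    rewrite sumR_split. simpl (sumR _ 1).
    assert (Hr : sumR (fun i => - Z / r (M + (1 + i))%nat) K =
                 - sumR (fun i => Z / r (N - K + i)%nat) K).
    { rewrite <- sumR_opp. apply sumR_ext; intros i Hi.
      replace (M + (1 + i))%nat with (N - K + i)%nat by (unfold M; lia).
      unfold Rdiv; ring. }
    rewrite Hr.
    assert (Hk : - Z / r (M + 0)%nat >= - Z / (delta * r (N - K)%nat)).
    { replace (M + 0)%nat with M by lia.
      assert (0 < r (N - K)%nat) by (apply Hrpos; lia).
      assert (0 < delta * r (N - K)%nat) by (apply Rmult_lt_0_compat; lra).
      assert (/ r M < / (delta * r (N - K)%nat)) by (apply Rinv_lt_contravar; nra).
      unfold Rdiv. nra. }
    lra.
  -
    intros Hc.
    set (M := (N - K)%nat) in *.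
    assert (E1 : rn x sigma M = r (M - 1)%nat) by (unfold rn; unfold Defs.xt; unfold r; reflexivity).
    assert (E2 : rn x sigma (M + 1) = r M).
    { unfold rn; unfold Defs.xt; unfold r. replace (M + 1 - 1)%nat with M by lia. reflexivity. }
    assert (E3 : sum_from_to (fun j => (INR M / (1 + delta) - Z) * (1 / rn x sigma j))
                   (M + 1) N =
                 sumR (fun i => (INR M / (1 + delta) - Z) * (1 / r (M + i)%nat)) K).
    { unfold sum_from_to. replace (S N - (M + 1))%nat with K by (unfold M; lia).
      apply sumR_ext; intros i Hi. unfold rn; unfold Defs.xt; unfold r.
      replace (M + 1 + i - 1)%nat with (M + i)%nat by lia. reflexivity. }
    rewrite E1, E2 in Hc. rewrite E3, HU, HUM.
    rewrite (HA M K) by (unfold M; lia).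
    pose proof (Hsplit M K ltac:(unfold M; lia)) as HS.
    assert (Hlow : sumR (fun i => sumR (G (M + i)%nat) M) K >=
                   sumR (fun i => INR M * (1 / ((1 + delta) * r (M + i)%nat))) K).
    { apply Rle_ge, sumR_le; intros i Hi. rewrite <- sumR_const.
      apply sumR_le; intros b Hb.
      assert (Hab : r b < r (M + i)%nat) by (apply Hmono; unfold M in *; lia).
      assert (0 < r b) by (apply Hrpos; unfold M in *; lia).
      assert (r b <= r (M - 1)%nat) by (apply Hmono'; unfold M in *; lia).
      assert (r M <= r (M + i)%nat) by (apply Hmono'; unfold M in *; lia).
      unfold G. destruct (Nat.eq_dec (M + i) b); [lia|].
      pose proof (dist3_tri (x (sigma (M + i)%nat)) (x (sigma b))).
      assert (0 < dist3 (x (sigma (M + i)%nat)) (x (sigma b))).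
      { apply dist3_pos. fold (r (M + i)%nat). fold (r b). lra. }
      fold (r (M + i)%nat) in *. fold (r b) in *.
      unfold Rdiv; rewrite !Rmult_1_l. apply Rinv_le_contravar; [lra|].
      nra. }
    assert (Hr : sumR (fun i => (INR M / (1 + delta) - Z) * (1 / r (M + i)%nat)) K =
      sumR (fun i => - Z / r (M + i)%nat) K +
      sumR (fun i => INR M * (1 / ((1 + delta) * r (M + i)%nat))) K).
    { rewrite <- sumR_plus. apply sumR_ext; intros i Hi.
      assert (0 < r (M + i)%nat) by (apply Hrpos; unfold M in *; lia).
      field; lra. }
    rewrite Hr. lra.
Qed.
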